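(* Let $\Delta\in\mathbb F^{m\times m}$ be a connection matrix with column/row partition $J_0,\dots,J_b$, and let $\widetilde\Delta^0,\dots,\widetilde\Delta^{m-1}$ be produced by the Row Cancellation Algorithm (RCA) applied to $\Delta$. Then: (i) for $r=0,\dots,m-1$, $\widetilde\Delta^r$ is compliant with the allowable sparsity pattern of $\Delta$; (ii) for $r=1,\dots,m-1$, every entry of $\widetilde\Delta^r$ at a primary pivot position of $\widetilde\Delta^r$ is nonzero, and every nonzero entry of $\widetilde\Delta^r$ at a position $(i,j)$ strictly below the $r$-th diagonal either is at a primary pivot position or lies in a column $j$ containing a (unique) primary pivot position $(i',j)$ with $i'>i$; (iii) if $(p-r,p)$ is marked as a primary pivot at iteration $r\le m-2$, then $\widetilde\Delta^s_{p-r,q}=0$ for all $q>p$ and all $s$ with $r+1\le s\le m-1$, and $\widetilde\Delta^s_{p\,\cdot}=0$ (the whole $p$-th row vanishes) for all $s$ with $r+1\le s\le m-1$; (iv) if $(i,j)$ is a primary pivot position of $\widetilde\Delta^{m-1}$, then column $i$ contains no primary pivot position; (v) each row contains at most one primary pivot position of $\widetilde\Delta^{m-1}$.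
   Context: Throughout, $\mathbb F$ is a field and $m\ge1$. $A_{i\cdot}$ is the $i$-th row of $A$. $U^{pq}$ is the $m\times m$ matrix whose only nonzero entry is a $1$ in position $(p,q)$. Superscripts on matrices are indices, not powers. A connection matrix (over $\mathbb F$) is a matrix $\Delta\in\mathbb F^{m\times m}$ together with a partition $\{1,\dots,m\}=J_0\sqcup\cdots\sqcup J_b$ (the column/row partition; the $J_k$ need not consist of consecutive integers) such that $\Delta$ is upper triangular, $\Delta\Delta=0$, and $\Delta_{ij}=0$ unless $i<j$ and $(i,j)\in\bigcup_{k=1}^bJ_{k-1}\times J_k$. This set of positions is the allowable sparsity pattern; a matrix is compliant with it if all its nonzero entries lie in it. For $1\le r\le m-1$ the $r$-th diagonal is $\{(j-r,j):r<j\le m\}$; a position $(i,j)$ is strictly below the $r$-th diagonal if $j-i<r$. Row Cancellation Algorithm (RCA) applied to a connection matrix $\Delta$: set $\widetilde\Delta^0=\widetilde\Delta^1=\Delta$. For $r=1,\dots,m-1$ in turn: (Markup) mark permanently as a primary pivot (marked at iteration $r$) every position $(j-r,j)$ on the $r$-th diagonal with $\widetilde\Delta^r_{j-r,j}\ne0$ such that no position of column $j$ was marked as a primary pivot at an earlier iteration. (Update, only for $r\le m-2$) If no position was marked at iteration $r$, put $\widetilde T^r=I$; otherwise let $j_1<\cdots<j_t$ be the columns of the positions marked at iteration $r$, let $\widetilde T^{r,s}=I-\sum_{q=j_s+1}^m\frac{\widetilde\Delta^r_{j_s-r,q}}{\widetilde\Delta^r_{j_s-r,j_s}}U^{j_sq}$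 and $\widetilde T^r=\widetilde T^{r,1}\cdots\widetilde T^{r,t}$. Set $\widetilde\Delta^{r+1}=(\widetilde T^r)^{-1}\widetilde\Delta^r\widetilde T^r$. The primary pivot positions of $\widetilde\Delta^r$ are the positions marked at iterations $1,\dots,r$. *)

(* Defs.v *)
From HB Require Import structures.
From mathcomp Require Import all_boot all_order all_algebra.
Set Implicit Arguments. Unset Strict Implicit. Unset Printing Implicit Defensive.
Import GRing.Theory.
Local Open Scope ring_scope.

(* Indices are 0-based ordinals 'I_m (paper: 1..m); only differences and
   order of indices matter, so this is a harmless shift. *)

Section RCA.
Variables (F : fieldType) (m : nat).

(* The partition J_0,...,J_b is encoded by blk : 'I_m -> 'I_b.+1, with
   J_k = blk^-1(k).  A position (i,j) is allowable iff i < j and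
   (i,j) in J_{k-1} x J_k for some 1 <= k <= b, i.e. blk j = blk i + 1. *)
Definition allowable (b : nat) (blk : 'I_m -> 'I_b.+1) (i j : 'I_m) : bool :=
  (i < j)%N && (val (blk j) == (val (blk i)).+1).

Definition compliant (b : nat) (blk : 'I_m -> 'I_b.+1) (A : 'M[F]_m) : Prop :=
  forall i j : 'I_m, A i j != 0 -> allowable blk i j.

Definition connection_matrix (b : nat) (blk : 'I_m -> 'I_b.+1) (D : 'M[F]_m)
  : Prop :=
  [/\ (forall i j : 'I_m, (j < i)%N -> D i j = 0),
      D *m D = 0 &
      compliant blk D].

Definition markup (r : nat) (Dr : 'M[F]_m) (P : {set 'I_m * 'I_m})
  : {set 'I_m * 'I_m} :=
  [set ij : 'I_m * 'I_m | [&& (val ij.1 + r == val ij.2)%N,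
                              Dr ij.1 ij.2 != 0 &
                              [forall i' : 'I_m, (i', ij.2) \notin P]]].

Definition Tfactor (r : nat) (Dr : 'M[F]_m) (j : 'I_m) : 'M[F]_m :=
  1%:M - \sum_(i : 'I_m | (val i + r == val j)%N)
           \sum_(q : 'I_m | (j < q)%N) (Dr i q / Dr i j) *: delta_mx j q.

(* T^r = T^{r,1} ... T^{r,t}, columns j_1 < ... < j_t of the positions marked
   at iteration r (enum 'I_m lists 0,...,m-1 in increasing order);
   T^r = I if nothing is marked. *)
Definition Tmat (r : nat) (Dr : 'M[F]_m) (M : {set 'I_m * 'I_m}) : 'M[F]_m :=
  foldr (fun j A => Tfactor r Dr j *m A) 1%:M
        [seq j <- enum 'I_m | [exists i : 'I_m, (i, j) \in M]].

(* rca D r = (tilde Delta^r, set of positions marked at iterations 1..r-1),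
   for r >= 1; rca D 0 = (Delta, empty). *)
Fixpoint rca (D : 'M[F]_m) (r : nat) : 'M[F]_m * {set 'I_m * 'I_m} :=
  match r with
  | 0 => (D, set0)
  | r'.+1 =>
      match r' with
      | 0 => (D, set0)
      | _ =>
        let Dr := (rca D r').1 in
        let P := (rca D r').2 in
        let M := markup r' Dr P in
        let T := Tmat r' Dr M in
        (invmx T *m Dr *m T, P :|: M)
      end
  end.

Definition RCAmat (D : 'M[F]_m) (r : nat) : 'M[F]_m := (rca D r).1.

Definition marked_at (D : 'M[F]_m) (r : nat) : {set 'I_m * 'I_m} :=
  if r == 0%N then set0 else markup r (RCAmat D r) (rca D r).2.

Definition pivots (D : 'M[F]_m) (r : nat) : {set 'I_m * 'I_m} :=
  if r == 0%N then set0 else (rca D r).2 :|: marked_at D r.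

End RCA.

(* Main.v *)
Require Import Defs.
From HB Require Import structures.
From mathcomp Require Import all_boot all_order all_algebra.
Set Implicit Arguments. Unset Strict Implicit. Unset Printing Implicit Defensive.
Import GRing.Theory.
Local Open Scope ring_scope.

Section Aux.
Variables (F : fieldType) (m b : nat) (blk : 'I_m -> 'I_b.+1).

Lemma sum_neq0 (I : finType) (f : I -> F) : \sum_i f i != 0 -> exists i, f i != 0.
Proof.
move=> H; apply/existsP; apply: contraR H => /existsPn H.
by rewrite big1 // => i _; apply/eqP; move/negPn: (H i).
Qed.

Definition blockup (U : 'M[F]_m) := forall x y, U x y != 0 -> (x <= y)%N && (blk x == blk y).

Lemma blockup1 : blockup 1%:M.
Proof. move=> x y; rewrite mxE; case: (eqVneq x y) => [->|_]; last by rewrite eqxx. by rewrite leqnn eqxx. Qed.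

Lemma blockupM U V : blockup U -> blockup V -> blockup (U *m V).
Proof.
move=> hU hV x y; rewrite mxE => /sum_neq0 [k]; rewrite mulf_eq0 negb_or => /andP[/hU/andP[h1 /eqP h2] /hV/andP[h3 /eqP h4]].
by rewrite (leq_trans h1 h3) h2 h4 eqxx.
Qed.

Lemma compliant_conj U A V : blockup U -> blockup V -> compliant blk A -> compliant blk (U *m A *m V).
Proof.
move=> hU hV hA x y; rewrite mxE => /sum_neq0 [l]; rewrite mulf_eq0 negb_or => /andP[].
rewrite mxE => /sum_neq0 [k]; rewrite mulf_eq0 negb_or => /andP[/hU/andP[h1 /eqP h2] /hA/andP[h3 /eqP h4]] /hV/andP[h5 /eqP h6].
rewrite /allowable (leq_ltn_trans h1 (leq_trans h3 h5)) /= -h6 h4 h2 //.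
Qed.


Variables (r : nat) (A : 'M[F]_m).

Definition Nj (j : 'I_m) : 'M[F]_m :=
  \sum_(i : 'I_m | (val i + r == val j)%N)
           \sum_(q : 'I_m | (j < q)%N) (A i q / A i j) *: delta_mx j q.

Lemma Tfactor_Nj j : Tfactor r A j = 1%:M - Nj j.
Proof. by []. Qed.

Definition sj (j y : 'I_m) : F := \sum_(i : 'I_m | (val i + r == val j)%N) A i y / A i j.

Lemma delta_sum (c : 'I_m -> F) (j x y : 'I_m) :
  (\sum_(q : 'I_m | (j < q)%N) c q *: delta_mx j q) x y = if (x == j) && (j < y)%N then c y else 0.
Proof.
rewrite summxE; under eq_bigr do rewrite !mxE.
have [e|nx] := eqVneq x j; last by rewrite big1 // => q _ /=; rewrite mulr0.
subst x => /=.
case: (ltnP j y) => hy.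
  rewrite (bigD1 y) //= eqxx mulr1 big1 ?addr0 // => q /andP[_ nq].
  by rewrite eq_sym (negbTE nq) mulr0.
rewrite big1 // => q hq; case: (eqVneq y q) => [e|_]; last by rewrite mulr0.
by subst; rewrite ltnNge hy in hq.
Qed.

Lemma Nj_entry j x y : Nj j x y = if (x == j) && (j < y)%N then sj j y else 0.
Proof.
rewrite summxE; under eq_bigr do rewrite delta_sum.
case: ifP => _ //; by rewrite big1.
Qed.

Lemma NjNj (j j' : 'I_m) : (j <= j')%N -> Nj j' *m Nj j = 0.
Proof.
move=> hj; apply/matrixP => x y; rewrite !mxE big1 // => k _.
rewrite !Nj_entry; have [e|nk] := eqVneq k j; last by rewrite /= mulr0.
by rewrite e ltnNge hj andbF mul0r.
Qed.

Definition Tm (s : seq 'I_m) := foldr (fun j X => Tfactor r A j *m X) 1%:M s.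

Lemma TmN s (j : 'I_m) : all (fun j' : 'I_m => (j < j')%N) s -> Tm s *m Nj j = Nj j.
Proof.
elim: s => [|j' s IH] /=; first by rewrite mul1mx.
case/andP=> h1 h2; rewrite -mulmxA IH // Tfactor_Nj mulmxBl mul1mx NjNj ?subr0 //.
exact: ltnW.
Qed.

Lemma Tm_inv s : sorted (fun a b : 'I_m => (a < b)%N) s ->
  Tm s *m (1%:M + \sum_(j <- s) Nj j) = 1%:M.
Proof.
elim: s => [|j s IH] /=; first by rewrite big_nil addr0 mulmx1.
move=> hp; have hs := path_sorted hp.
have ha := order_path_min (fun a b c : 'I_m => @ltn_trans a b c) hp.
rewrite big_cons addrCA -mulmxA mulmxDr IH // TmN // Tfactor_Nj.
by rewrite mulmxDr mulmx1 mulmxBl mul1mx NjNj // subr0 addrC subrK.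
Qed.


Lemma sum_neq0P (I : finType) (P : pred I) (f : I -> F) :
  \sum_(i | P i) f i != 0 -> exists i, P i && (f i != 0).
Proof.
move=> H; apply/existsP; apply: contraR H => /existsPn H.
by rewrite big1 // => i Pi; apply/eqP; move: (H i); rewrite Pi /= negbK.
Qed.

Lemma sj_nz (hA : compliant blk A) j y : sj j y != 0 -> blk y = blk j.
Proof.
case/sum_neq0P => i /andP[_]; rewrite mulf_eq0 negb_or invr_eq0 => /andP[/hA h1 /hA h2].
apply: val_inj; move: h1 h2; rewrite /allowable => /andP[_ /eqP ->] /andP[_ /eqP ->] //.
Qed.

Lemma blockup_Tfactor (hA : compliant blk A) j : blockup (Tfactor r A j).
Proof.
move=> x y; rewrite Tfactor_Nj !mxE.
have [<-|nxy] := eqVneq x y; first by rewrite leqnn eqxx.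
rewrite sub0r oppr_eq0 Nj_entry; case: ifP; last by rewrite eqxx.
case/andP=> /eqP -> hy /(sj_nz hA) ->; by rewrite (ltnW hy) eqxx.
Qed.

Lemma blockup_Tm (hA : compliant blk A) s : blockup (Tm s).
Proof.
elim: s => [|j s IH] /=; first exact: blockup1.
apply: blockupM => //; exact: blockup_Tfactor.
Qed.

End Aux.

Definition Inv (F : fieldType) (m b : nat) (blk : 'I_m -> 'I_b.+1) (r : nat)
  (A : 'M[F]_m) (P : {set 'I_m * 'I_m}) : Prop :=
  [/\ A *m A = 0, compliant blk A,
     (forall i j, (i, j) \in P -> [/\ (j < i + r)%N, A i j != 0,
          (forall q : 'I_m, (j < q)%N -> A i q = 0) & forall q, A j q = 0]),
     (forall i j : 'I_m, (j < i + r)%N -> A i j != 0 ->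
          exists i', ((i', j) \in P) && (i <= i')%N) &
     (forall i i' j, (i, j) \in P -> (i', j) \in P -> i = i')].

Section Step.
Variables (F : fieldType) (m b : nat) (blk : 'I_m -> 'I_b.+1) (r : nat)
  (A : 'M[F]_m) (P : {set 'I_m * 'I_m}).
Hypothesis hr : (1 <= r)%N.
Hypothesis hinv : Inv blk r A P.

Let M := markup r A P.
Let inJ (j : 'I_m) := [exists i, (i, j) \in M].
Let S := [seq j <- enum 'I_m | inJ j].
Let T := Tmat r A M.
Let N := \sum_(j <- S) Nj r A j.

Lemma inM i j : ((i, j) \in M) = [&& (i + r == j)%N, A i j != 0 & [forall i', (i', j) \notin P]].
Proof. by rewrite inE. Qed.

Lemma inJP j : reflect (exists i, (i, j) \in M) (inJ j).
Proof. exact: existsP. Qed.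

Lemma sjM i x y : (i, x) \in M -> sj r A x y = A i y / A i x.
Proof.
rewrite inM => /and3P[/eqP e _ _]; rewrite /sj (big_pred1 i) // => i'.
rewrite /= -e eqn_add2r; apply/eqP/eqP => [/val_inj|->] //.
Qed.

Lemma N_entry x y : N x y = if inJ x && (x < y)%N then sj r A x y else 0.
Proof.
rewrite summxE big_filter big_enum_cond.
under eq_bigr do rewrite Nj_entry.
case: (boolP (inJ x)) => hx /=.
  rewrite (bigD1 x) //= eqxx /= big1 ?addr0 // => j /andP[_ nj].
  by rewrite eq_sym (negbTE nj).
by rewrite big1 // => j hj; case: (eqVneq x j) => [e|] //; subst; rewrite hj in hx.
Qed.

Lemma N_M i x y : (i, x) \in M -> N x y = if (x < y)%N then A i y / A i x else 0.
Proof.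
move=> h; rewrite N_entry (sjM _ h); have ->: inJ x by apply/inJP; exists i.
by [].
Qed.

Lemma N_notJ x y : ~~ inJ x -> N x y = 0.
Proof. by move=> h; rewrite N_entry (negbTE h). Qed.

Lemma N_nz k y : N k y != 0 -> inJ k && (k < y)%N.
Proof. rewrite N_entry; case: ifP => //; by rewrite eqxx. Qed.

Lemma sortedS : sorted (fun a b : 'I_m => (a < b)%N) S.
Proof.
apply: sorted_filter; first exact: (fun a b c : 'I_m => @ltn_trans a b c).
have := iota_ltn_sorted 0 m; rewrite -val_enum_ord sorted_map; by [].
Qed.

Lemma TN : T *m (1%:M + N) = 1%:M.
Proof. exact: (Tm_inv r A sortedS). Qed.

Lemma NT : (1%:M + N) *m T = 1%:M.
Proof. exact: mulmx1C TN. Qed.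

Lemma invT : invmx T = 1%:M + N.
Proof.
have [hu _] := mulmx1_unit TN.
by have := congr1 (mulmx (invmx T)) TN; rewrite mulmxA mulVmx // mul1mx mulmx1.
Qed.


Let hsq : A *m A = 0. Proof. by case: hinv. Qed.
Let hcomp : compliant blk A. Proof. by case: hinv. Qed.
Let hP : forall i j, (i, j) \in P -> [/\ (j < i + r)%N, A i j != 0,
          (forall q : 'I_m, (j < q)%N -> A i q = 0) & forall q, A j q = 0].
Proof. by case: hinv. Qed.
Let hD : forall i j : 'I_m, (j < i + r)%N -> A i j != 0 ->
          exists i', ((i', j) \in P) && (i <= i')%N.
Proof. by case: hinv. Qed.
Let hU : forall i i' j, (i, j) \in P -> (i', j) \in P -> i = i'.
Proof. by case: hinv. Qed.

Lemma L1 i k : A i k != 0 -> (k < i + r)%N -> forall q, A k q = 0.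
Proof.
move=> h1 h2 q; have [i' /andP[hi' _]] := hD h2 h1.
by have [_ _ _ ->] := hP hi'.
Qed.

Lemma L2 j k : inJ j -> A k j != 0 -> (k + r <= j)%N.
Proof.
move=> /inJP [i0]; rewrite inM => /and3P[_ _ /forallP hf] hk.
rewrite leqNgt; apply/negP => hlt; have [i' /andP[hi' _]] := hD hlt hk.
by move: (hf i'); rewrite hi'.
Qed.

Lemma L3 i j : (i, j) \in P -> ~~ inJ j.
Proof.
move=> h; apply/negP => /inJP [i0]; rewrite inM => /and3P[_ _ /forallP hf].
by move: (hf i); rewrite h.
Qed.

Lemma L45 i j : inJ i -> A i j != 0 -> (forall k : 'I_m, (i < k)%N -> A k j = 0) -> False.
Proof.
case/inJP => i0; rewrite inM => /and3P[/eqP e h0 _] hij hk.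
have := congr1 (fun X : 'M[F]_m => X i0 j) hsq; rewrite !mxE (bigD1 i) //= big1 ?addr0.
  by move=> /eqP; apply/negP; rewrite mulf_neq0.
move=> k nk; case: (ltngtP i k) => h; first by rewrite hk // mulr0.
  case: (eqVneq (A i0 k) 0) => [->|nz]; first by rewrite mul0r.
  by rewrite (L1 nz) ?mulr0 // e.
have e2 : k = i by apply: val_inj; rewrite /= h.
by rewrite e2 eqxx in nk.
Qed.

Lemma L4 i j : (i, j) \in M -> ~~ inJ i.
Proof.
move=> h; apply/negP => hJ; move: (h); rewrite inM => /and3P[/eqP e hij _].
apply: (L45 hJ hij) => k hk; apply/eqP; apply: contraT => nz.
have hj : inJ j by apply/inJP; exists i.
by have := L2 hj nz; rewrite -e leq_add2r leqNgt hk.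
Qed.

Lemma L5 i j : (i, j) \in P -> ~~ inJ i.
Proof.
move=> h; apply/negP => hJ; have [hlt hij _ _] := hP h.
apply: (L45 hJ hij) => k hk; apply/eqP; apply: contraT => nz.
have hlt' : (j < k + r)%N by apply: (ltn_trans hlt); rewrite ltn_add2r.
have [i' /andP[hi' hki']] := hD hlt' nz.
have ei := hU h hi'; subst i'.
by rewrite leqNgt hk in hki'.
Qed.

Definition C := A *m T.
Definition B := invmx T *m A *m T.

Lemma C_eq (x y : 'I_m) : C x y = A x y - \sum_k C x k * N k y.
Proof.
have : C *m (1%:M + N) = A by rewrite /C -mulmxA TN mulmx1.
move/(congr1 (fun X : 'M[F]_m => X x y)); rewrite mulmxDr mulmx1 mxE => <-.
by rewrite [(C *m N) x y]mxE addrK.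
Qed.

Lemma C_low (x y : 'I_m) : (y <= x + r)%N -> C x y = A x y.
Proof.
suff H : forall n (y : 'I_m), (y < n)%N -> (y <= x + r)%N -> C x y = A x y.
  by apply: H (ltn_ord y).
elim=> [|n IH] y' //= hy hyr.
rewrite C_eq big1 ?subr0 // => k _.
case: (eqVneq (N k y') 0) => [->|nz]; first by rewrite mulr0.
have /andP[hk hky] := N_nz nz.
rewrite IH; last by rewrite (leq_trans (ltnW hky)).
  case: (eqVneq (A x k) 0) => [->|nzA]; first by rewrite mul0r.
  by have := L2 hk nzA; rewrite leqNgt (leq_trans hky hyr).
by rewrite (leq_trans hky).
Qed.


Lemma C_piv p j : (p, j) \in M -> forall y : 'I_m, (j < y)%N -> C p y = 0.
Proof.
move=> hM; have hj : inJ j by apply/inJP; exists p.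
move: (hM); rewrite inM => /and3P[/eqP e hpj _].
suff H : forall n (y : 'I_m), (y < n)%N -> (j < y)%N -> C p y = 0.
  by move=> y; apply: H (ltn_ord y).
elim=> [|n IH] y' //= hy hjy.
rewrite C_eq (bigD1 j) //= (N_M _ hM) hjy C_low ?e // mulrC mulfVK //.
rewrite big1 ?addr0 ?subrr // => k nk.
case: (eqVneq (N k y') 0) => [->|nz]; first by rewrite mulr0.
have /andP[hk hky] := N_nz nz.
case: (ltngtP k j) => h.
- rewrite C_low; last by rewrite e ltnW.
  case: (eqVneq (A p k) 0) => [->|nzA]; first by rewrite mul0r.
  by have := L2 hk nzA; rewrite e leqNgt h.
- by rewrite IH ?mul0r // (leq_trans hky).
- have e2 : k = j by apply: val_inj; rewrite /= h.
  by rewrite e2 eqxx in nk.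
Qed.

Lemma C_old i j : (i, j) \in P -> forall y : 'I_m, (j < y)%N -> C i y = 0.
Proof.
move=> hPi; have [hlt _ hrow _] := hP hPi.
suff H : forall n (y : 'I_m), (y < n)%N -> (j < y)%N -> C i y = 0.
  by move=> y; apply: H (ltn_ord y).
elim=> [|n IH] y' //= hy hjy.
rewrite C_eq hrow // big1 ?subrr // => k _.
case: (eqVneq (N k y') 0) => [->|nz]; first by rewrite mulr0.
have /andP[hk hky] := N_nz nz.
case: (leqP k j) => h.
- rewrite C_low; last by rewrite ltnW // (leq_ltn_trans h hlt).
  case: (eqVneq (A i k) 0) => [->|nzA]; first by rewrite mul0r.
  by have := L2 hk nzA; rewrite leqNgt (leq_ltn_trans h hlt).
- by rewrite IH ?mul0r // (leq_trans hky).
Qed.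

Lemma C_rowzero x : (forall q, A x q = 0) -> forall q, C x q = 0.
Proof. by move=> h q; rewrite /C mxE big1 // => k _; rewrite h mul0r. Qed.

Lemma B_eq : B = (1%:M + N) *m C.
Proof. by rewrite /B invT /C mulmxA. Qed.

Lemma B_notJ x y : ~~ inJ x -> B x y = C x y.
Proof.
move=> hx; rewrite B_eq mulmxDl mul1mx mxE [(N *m C) x y]mxE big1 ?addr0 // => k _.
by rewrite N_notJ // mul0r.
Qed.

Lemma B_sq : B *m B = 0.
Proof.
have -> : B *m B = invmx T *m (A *m (T *m invmx T) *m A) *m T by rewrite !mulmxA.
by rewrite invT TN mulmx1 hsq mulmx0 mul0mx.
Qed.

Lemma B_J x y : inJ x -> B x y = 0.
Proof.
case/inJP => p hM; have hp := L4 hM.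
move: (hM); rewrite inM => /and3P[/eqP e hpx _].
have h0 : (0 : 'M[F]_m) p y = 0 by rewrite mxE.
have := congr1 (fun X : 'M[F]_m => X p y) B_sq; rewrite h0 [(B *m B) p y]mxE (bigD1 x) //= big1 ?addr0.
  rewrite B_notJ // C_low ?e // => /eqP; rewrite mulf_eq0 (negbTE hpx) /=; by move/eqP.
move=> k nk; rewrite B_notJ //.
case: (ltngtP k x) => h.
- rewrite C_low; last by rewrite e ltnW.
  case: (eqVneq (A p k) 0) => [->|nzA]; first by rewrite mul0r.
  have hk : (k < p + r)%N by rewrite e.
  have [i' /andP[hi' _]] := hD hk nzA.
  by rewrite B_notJ ?(L3 hi') // (C_rowzero (L1 nzA hk)) mulr0.
- by rewrite (C_piv hM) // mul0r.
- have e2 : k = x by apply: val_inj; rewrite /= h.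
  by rewrite e2 eqxx in nk.
Qed.


Lemma blockup_invT : blockup blk (1%:M + N).
Proof.
move=> x y; rewrite !mxE.
have [<-|nxy] := eqVneq x y; first by rewrite leqnn eqxx.
rewrite add0r N_entry; case: ifP; last by rewrite eqxx.
case/andP=> _ hy /(sj_nz hcomp) ->; by rewrite (ltnW hy) eqxx.
Qed.

Lemma B_comp : compliant blk B.
Proof.
rewrite /B invT; apply: compliant_conj => //; first exact: blockup_invT.
exact: (@blockup_Tm _ _ _ blk r A hcomp S).
Qed.

Lemma inJM i j : (i, j) \in M -> inJ j.
Proof. by move=> h; apply/inJP; exists i. Qed.

Lemma step : Inv blk r.+1 B (P :|: M).
Proof.
split.
- exact: B_sq.
- exact: B_comp.
- move=> i j; rewrite in_setU => /orP[h|h].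
    have [hlt hij hrow hcol] := hP h.
    have hi := L5 h; have hj := L3 h.
    split.
    + by rewrite addnS ltnS ltnW.
    + by rewrite B_notJ // C_low // ltnW.
    + by move=> q hq; rewrite B_notJ // (C_old h).
    + by move=> q; rewrite B_notJ // (C_rowzero hcol).
  have hi := L4 h; have hj := inJM h.
  move: (h); rewrite inM => /and3P[/eqP e hij _].
  split.
  + by rewrite addnS ltnS e.
  + by rewrite B_notJ // C_low // e.
  + by move=> q hq; rewrite B_notJ // (C_piv h).
  + by move=> q; rewrite B_J.
- move=> i j hlt hB.
  case: (boolP (inJ i)) => hi; first by rewrite B_J ?eqxx in hB.
  have hle : (j <= i + r)%N by rewrite -ltnS -addnS.
  rewrite B_notJ // C_low // in hB.
  case: (ltnP j (i + r)) => hjr.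
    have [i' /andP[hi' hii']] := hD hjr hB.
    by exists i'; rewrite in_setU hi' hii'.
  have ej : val j = (i + r)%N by apply/eqP; rewrite eqn_leq hle hjr.
  case: (boolP [exists i', (i', j) \in P]) => [/existsP [i' hi']|hn].
    have [hlt' _ _ _] := hP hi'.
    exists i'; rewrite in_setU hi' /=; apply: ltnW.
    by move: hlt'; rewrite ej ltn_add2r.
  have hM : (i, j) \in M.
    rewrite inM ej eqxx hB /=.
    apply/forallP => i'; apply/negP => hi'; move/negP: hn; apply; apply/existsP; by exists i'.
  by exists i; rewrite in_setU hM orbT leqnn.
- move=> i i' j; rewrite !in_setU => /orP[h|h] /orP[h'|h'].
  + exact: hU h h'.
  + by move: (L3 h); rewrite (inJM h').
  + by move: (L3 h'); rewrite (inJM h).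
  + move: h h'; rewrite !inM => /and3P[/eqP e _ _] /and3P[/eqP e' _ _].
    by apply: val_inj; apply/eqP; rewrite -(eqn_add2r r) e e'.
Qed.

End Step.

Section Main.
Variables (F : fieldType) (m b : nat) (blk : 'I_m -> 'I_b.+1) (D : 'M[F]_m).

Lemma rcaS r : (1 <= r)%N ->
  rca D r.+1 = (B r (RCAmat D r) (rca D r).2,
                (rca D r).2 :|: markup r (RCAmat D r) (rca D r).2).
Proof. by case: r. Qed.

Lemma rcaS2 r : (1 <= r)%N ->
  (rca D r.+1).2 = (rca D r).2 :|: marked_at D r.
Proof. by move=> hr; rewrite rcaS //; case: r hr. Qed.

Lemma pivotsE r : (1 <= r)%N -> pivots D r = (rca D r).2 :|: marked_at D r.
Proof. by case: r. Qed.

Lemma marked_atE r : (1 <= r)%N -> marked_at D r = markup r (RCAmat D r) (rca D r).2.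
Proof. by case: r. Qed.

Lemma Inv_all : connection_matrix blk D -> forall r, (1 <= r)%N -> Inv blk r (RCAmat D r) (rca D r).2.
Proof.
move=> [hup hsq hc]; elim=> [|r IH] // _.
case: r IH => [|r] IH.
  split => //; try by move=> i j; rewrite in_set0.
  - move=> i j hlt hnz; have := hc _ _ hnz; rewrite /allowable => /andP[h _].
    by rewrite addn1 ltnS leqNgt h in hlt.
  - by move=> i i' j; rewrite in_set0.
rewrite /RCAmat rcaS //; exact: step (IH isT).
Qed.

Lemma P_mono r s : (1 <= r)%N -> (r <= s)%N -> (rca D r).2 \subset (rca D s).2.
Proof.
move=> hr; elim: s => [|s IH]; first by rewrite leqn0 => /eqP e; subst r.
rewrite leq_eqVlt => /orP[/eqP <-|hs]; first exact: subxx.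
apply: subset_trans (IH hs) _; rewrite rcaS2 ?subsetUl //.
exact: leq_trans hr hs.
Qed.

End Main.
Theorem mainTheorem11 (F : fieldType) (m b : nat) (blk : 'I_m -> 'I_b.+1)
    (D : 'M[F]_m) :
  (0 < m)%N ->
  connection_matrix blk D ->
  (* (i) *)
  (forall r : nat, (r < m)%N -> compliant blk (RCAmat D r)) /\
  (* (ii) *)
  (forall r : nat, (1 <= r < m)%N ->
     (forall i j : 'I_m, (i, j) \in pivots D r -> RCAmat D r i j != 0) /\
     (forall i j : 'I_m, (j < i + r)%N -> RCAmat D r i j != 0 ->
        (i, j) \in pivots D r \/
        exists i' : 'I_m, [/\ (i', j) \in pivots D r, (i < i')%N &
          forall i'' : 'I_m, (i'', j) \in pivots D r -> i'' = i'])) /\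
  (* (iii) *)
  (forall (r : nat) (i p : 'I_m), (1 <= r)%N -> (r.+2 <= m)%N ->
     (val i + r)%N = val p -> (i, p) \in marked_at D r ->
     forall s : nat, (r.+1 <= s < m)%N ->
       (forall q : 'I_m, (p < q)%N -> RCAmat D s i q = 0) /\
       (forall q : 'I_m, RCAmat D s p q = 0)) /\
  (* (iv) *)
  (forall i j : 'I_m, (i, j) \in pivots D m.-1 ->
     forall k : 'I_m, (k, i) \notin pivots D m.-1) /\
  (* (v) *)
  (forall i j j' : 'I_m, (i, j) \in pivots D m.-1 ->
     (i, j') \in pivots D m.-1 -> j = j').
Proof.
move=> hm hDc; have I := Inv_all hDc.
have piv_nz : forall r (i j : 'I_m), (1 <= r)%N -> (i, j) \in pivots D r -> RCAmat D r i j != 0.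
  move=> r i j hr; rewrite pivotsE // in_setU => /orP[h|].
    by have [_ _ hP _ _] := I r hr; have [] := hP _ _ h.
  by rewrite marked_atE // inE => /and3P[].
split.
  case=> [|r] _; first by case: hDc.
  by have [] := I r.+1 isT.
split.
  move=> r /andP[hr _]; have [_ _ hP hD hU] := I r hr.
  split; first by move=> i j; exact: piv_nz.
  move=> i j hlt hnz; have [i' /andP[hi' hii']] := hD _ _ hlt hnz.
  case: (eqVneq i i') => [ei|nii']; first by left; rewrite pivotsE // in_setU ei hi'.
  right; exists i'; split.
  - by rewrite pivotsE // in_setU hi'.
  - by rewrite ltn_neqAle hii' andbT; apply: contra nii' => /eqP e; apply/eqP/val_inj.
  - move=> i''; rewrite pivotsE // in_setU => /orP[h|]; first exact: hU h hi'.
    rewrite marked_atE // inE => /and3P[_ _ /forallP hf].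
    by move: (hf i'); rewrite hi'.
split.
  move=> r i p hr1 hr2 e hmark s /andP[hs1 hs2].
  have hs : (1 <= s)%N by apply: leq_trans hr1 _; apply: ltnW.
  have hin : (i, p) \in (rca D s).2.
    apply: (subsetP (P_mono D (leqW hr1) hs1)).
    by rewrite rcaS2 // in_setU hmark orbT.
  have [_ _ hP _ _] := I s hs; have [_ _ h1 h2] := hP _ _ hin.
  by split.
case: m blk D hm hDc I piv_nz => [|[|m']] blk' D' hm' hDc I piv_nz; first by [].
  have e0 : pivots D' 1.-1 = set0 by [].
  by rewrite e0; split => i j; rewrite in_set0.
have hr : (1 <= (m'.+2).-1)%N by [].
have [_ hcomp hP _ _] := I _ hr.
split.
  move=> i j hij k; apply/negP; rewrite pivotsE // in_setU => /orP[h|].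
    have [_ _ _ hrow] := hP _ _ h.
    by move: (piv_nz _ _ _ hr hij); rewrite hrow eqxx.
  rewrite marked_atE // inE => /and3P[/eqP e _ _]; move: e => /= e.
  have := hcomp _ _ (piv_nz _ _ _ hr hij); rewrite /allowable => /andP[hlt _].
  move: hlt; rewrite -e => hlt.
  have h3 := leq_trans hlt (ltn_ord j).
  by rewrite ltnNge leq_addl in h3.
have key : forall i j j' : 'I_m'.+2, (i, j) \in pivots D' (m'.+2).-1 ->
    (i, j') \in pivots D' (m'.+2).-1 -> ~~ (j < j')%N.
  move=> i j j' hij hij'; apply/negP => hjj'.
  move: hij; rewrite pivotsE // in_setU => /orP[h|].
    have [_ _ hrow _] := hP _ _ h.
    by move: (piv_nz _ _ _ hr hij'); rewrite hrow // eqxx.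
  rewrite marked_atE // inE => /and3P[/eqP e _ _]; move: e => /= e.
  move: hjj'; rewrite -e => hjj'.
  have h3 := leq_trans hjj' (ltn_ord j').
  by rewrite ltnNge leq_addl in h3.
move=> i j j' hij hij'; have k1 := key _ _ _ hij hij'; have k2 := key _ _ _ hij' hij.
case: (ltngtP j j') => h; [by rewrite h in k1 | by rewrite h in k2 | exact: ord_inj].
Qed.
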